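(* Let $(\mathbb{X},d,\mu)$ be a metric measure space, $\Omega\subset\mathbb{X}$ a domain and $\varrho$ an admissible radius function in $\Omega$. Then for every $u\in L^\infty(\Omega)$, all $x,y\in\Omega$ and every $n\in\mathbb{N}$, $$|\mathcal{M}^nu(x)-\mathcal{M}^nu(y)|\leq2\|u\|_\infty\frac{\mu(B_x\triangle B_y)}{\max\{\mu(B_x),\mu(B_y)\}}.$$
   Context: A metric measure space $(\mathbb{X},d,\mu)$ is a metric space with a positive Borel regular measure $\mu$ with $0<\mu(B)<\infty$ for every ball $B$. An admissible radius function in $\Omega$ is $\varrho\in C(\overline\Omega)$, $\varrho\ge0$, with $0<\varrho(x)\leq\mathrm{dist}(x,\partial\Omega)$ for $x\in\Omega$ and $\varrho=0$ exactly on $\partial\Omega$. For $x\in\Omega$, $B_x=\overline{B}(x,\varrho(x))$ and $\mathcal{M}u(x)=\frac{1}{\mu(B_x)}\int_{B_x}u\,d\mu$; $\mathcal{M}^n$ is the $n$-th iterate. $A\triangle B=(A\setminus B)\cup(B\setminus A)$. *)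

(* Defs.v *)
From HB Require Import structures.
From mathcomp Require Import all_boot all_order all_algebra.
From mathcomp Require Import all_classical all_reals all_analysis.
Set Implicit Arguments. Unset Strict Implicit. Unset Printing Implicit Defensive.
Import Order.TTheory GRing.Theory Num.Theory.
Local Open Scope classical_set_scope.
Local Open Scope ring_scope.

Section MetricDefs.
Context {R : realType} {T : Type}.
Variable dist : T -> T -> R.

Definition is_metric : Prop :=
  (forall x y, 0 <= dist x y) /\ (forall x y, dist x y = 0 <-> x = y) /\
  (forall x y, dist x y = dist y x) /\
  (forall x y z, dist x z <= dist x y + dist y z).

Definition oball (x : T) (r : R) : set T := [set y | dist x y < r].
Definition cball (x : T) (r : R) : set T := [set y | dist x y <= r].

Definition mopen (A : set T) : Prop :=
  forall x, A x -> exists2 r, 0 < r & oball x r `<=` A.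
Definition minterior (A : set T) : set T :=
  [set x | exists2 r, 0 < r & oball x r `<=` A].
Definition mclosure (A : set T) : set T :=
  [set x | forall r, 0 < r -> oball x r `&` A !=set0].
Definition mboundary (A : set T) : set T := mclosure A `\` minterior A.

Definition mconnected (A : set T) : Prop :=
  forall U V, mopen U -> mopen V -> A `<=` U `|` V -> U `&` V `&` A = set0 ->
    A `&` U = set0 \/ A `&` V = set0.

Definition mdomain (O : set T) : Prop := O !=set0 /\ mopen O /\ mconnected O.

(* distance from a point to a set (+oo for the empty set) *)
Definition dist_set (x : T) (S : set T) : \bar R :=
  ereal_inf [set (dist x y)%:E | y in S].

Definition admissible (O : set T) (rho : T -> R) : Prop :=
  (forall x, mclosure O x -> 0 <= rho x) /\
  (forall x, mclosure O x -> forall e, 0 < e -> exists2 dl, 0 < dl &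
     forall y, mclosure O y -> dist x y < dl -> `|rho y - rho x| < e) /\
  (forall x, O x -> 0 < rho x /\ ((rho x)%:E <= dist_set x (mboundary O))%E) /\
  (forall x, mclosure O x -> (rho x = 0 <-> mboundary O x)).

Definition ball_of (rho : T -> R) (x : T) : set T := cball x (rho x).

End MetricDefs.

Definition symdiff {T : Type} (A B : set T) : set T := (A `\` B) `|` (B `\` A).

Definition metric_measure_space {R : realType} {d} {T : measurableType d}
  (dist : T -> T -> R) (mu : set T -> \bar R) : Prop :=
  is_metric dist /\
  (forall A, mopen dist A -> measurable A) /\
  (forall A, measurable A -> exists B,
      <<s mopen dist >> B /\ A `<=` B /\ mu A = mu B) /\
  (forall x r, 0 < r -> (0 < mu (oball dist x r) < +oo)%E).

Definition linf_norm {R : realType} {d} {T : measurableType d}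
  (mu : set T -> \bar R) (D : set T) (u : T -> R) : \bar R :=
  ereal_inf [set M : \bar R | exists N, measurable N /\ mu N = 0%E /\
     forall x, D x -> ~ N x -> (`|u x|%:E <= M)%E].

(* averaging operator M v (x) = (1/mu(B_x)) \int_{B_x} v dmu, where v is a
   function on O (extended by zero outside O). *)
Definition avg_op {R : realType} {d} {T : measurableType d}
  (mu : set T -> \bar R) (dist : T -> T -> R) (O : set T) (rho : T -> R)
  (v : T -> R) : T -> R :=
  fun x => fine (\int[mu]_(y in ball_of dist rho x `&` O) (v y)%:E)
           / fine (mu (ball_of dist rho x)).

(* Main.v *)
Require Import Defs.
From HB Require Import structures.
From mathcomp Require Import all_boot all_order all_algebra.
From mathcomp Require Import all_classical all_reals all_analysis.
From mathcomp Require Import measurable_realfun.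
From mathcomp Require Import ring lra.
Import Order.TTheory GRing.Theory Num.Theory.
Local Open Scope classical_set_scope.
Local Open Scope ring_scope.
Section Key.
Context (R : realType) d (T : measurableType d) (mu : {measure set T -> \bar R}).
Local Open Scope ereal_scope.
Import HBNNSimple.

Lemma int_mono (D : set T) (f g : T -> \bar R) : (forall x, D x -> 0 <= f x) ->
  (forall x, D x -> f x <= g x) -> \int[mu]_(x in D) f x <= \int[mu]_(x in D) g x.
Proof.
move=> f0 fg.
have g0 : forall x, D x -> 0 <= g x by move=> x Dx; exact: le_trans (f0 _ Dx) (fg _ Dx).
rewrite !ge0_integralE //.
apply: ereal_sup_le => _ [h hf <-]; exists h => //= x; apply: le_trans (hf x) _.
rewrite /patch; case: ifP => // /set_mem Dx; exact: fg.
Qed.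

Lemma split_ub (C D N : set T) (g : T -> \bar R) (L : R) :
  measurable C -> measurable D -> measurable N -> mu N = 0 -> [disjoint C & D] ->
  (0 <= L)%R -> (forall x, 0 <= g x) -> (forall x, D x -> ~ N x -> g x <= L%:E) ->
  \int[mu]_(x in C `|` D) g x <= \int[mu]_(x in C) g x + L%:E * mu D.
Proof.
move=> mC mD mN N0 CD L0 g0 gL.
rewrite (ge0_integralE _ (fun x _ => g0 x)).
apply: ge_ereal_sup => _ [h hg <-] /=.
have mh : measurable_fun setT (EFin \o h).
  by apply/measurable_EFinP; exact: measurable_funPT.
have h0 x : (0 <= (h x)%:E) by rewrite lee_fin.
rewrite -integralT_nnsfun.
have -> : \int[mu]_x (h x)%:E = \int[mu]_(x in C `|` D) (h x)%:E.
  rewrite [RHS]integral_mkcond; apply: eq_integral => x _.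
  rewrite /patch; case: ifPn => // nx.
  apply/eqP; rewrite eq_le h0 andbT; move: (hg x); rewrite /patch.
  by rewrite (negbTE nx).
rewrite ge0_integral_setU //; last by apply: measurable_funS mh.
apply: leeD.
  apply: int_mono => // x Cx; move: (hg x); rewrite /patch ifT //.
  by apply/mem_set; left.
apply: (@le_trans _ _ (\int[mu]_(x in D) (cst L%:E) x)); last first.
  by rewrite integral_cst.
apply: ae_ge0_le_integral => //.
- by apply: measurable_funS mh.
- exists N; split => // x /= H; apply: contra_notP H => Nx Dx.
  apply: le_trans (gL _ Dx Nx); move: (hg x); rewrite /patch ifT //.
  by apply/mem_set; right.
Qed.

Lemma split_lb (C D : set T) (g : T -> \bar R) : (forall x, 0 <= g x) ->
  \int[mu]_(x in C) g x <= \int[mu]_(x in C `|` D) g x.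
Proof.
move=> g0; rewrite !(ge0_integralE _ (fun x _ => g0 x)).
apply: ereal_sup_le => _ [h hg <-]; exists h => //= x; apply: le_trans (hg x) _.
rewrite /patch; case: ifPn => [xC|_]; last by case: ifP => _ //; exact: g0.
by rewrite ifT //; apply/mem_set; left; apply/set_mem.
Qed.

Lemma F1 (A N O : set T) (g : T -> \bar R) (L a : R) :
  measurable A -> measurable N -> mu N = 0 -> (0 <= L)%R -> (forall x, 0 <= g x) ->
  (forall x, O x -> ~ N x -> g x <= L%:E) -> A `<=` O -> mu A = a%:E ->
  \int[mu]_(x in A) g x = (fine (\int[mu]_(x in A) g x))%:E /\
  (0 <= fine (\int[mu]_(x in A) g x) <= L * a)%R.
Proof.
move=> mA mN N0 L0 g0 gL AO muA.
have ub := @split_ub set0 A N g L measurable0 mA mN N0.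
rewrite set0U integral_set0 add0e muA in ub.
have {}ub := ub ltac:(by rewrite disj_set2E set0I) L0 g0 (fun x Ax => gL x (AO x Ax)).
have lb : 0 <= \int[mu]_(x in A) g x by apply: integral_ge0 => x _; exact: g0.
have fin : \int[mu]_(x in A) g x \is a fin_num.
  by rewrite ge0_fin_numE // (le_lt_trans ub) // -EFinM ltry.
split; first by rewrite fineK.
by rewrite -!lee_fin fineK // lb EFinM.
Qed.

Lemma F2 (C D N O : set T) (g : T -> \bar R) (L c e : R) :
  measurable C -> measurable D -> measurable N -> mu N = 0 -> [disjoint C & D] ->
  (0 <= L)%R -> (forall x, 0 <= g x) ->
  (forall x, O x -> ~ N x -> g x <= L%:E) -> C `<=` O -> D `<=` O ->
  mu C = c%:E -> mu D = e%:E ->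
  (fine (\int[mu]_(x in C) g x) <= fine (\int[mu]_(x in C `|` D) g x)
    <= fine (\int[mu]_(x in C) g x) + L * e)%R.
Proof.
move=> mC mD mN N0 CD L0 g0 gL CO DO muC muD.
have muCD : mu (C `|` D) = (c + e)%:E.
  have CD0 : C `&` D = set0 by move: CD; rewrite disj_set2E => /eqP.
  by rewrite measureU // EFinD -muC -muD.
have [E1 _] := F1 C N O g L c mC mN N0 L0 g0 gL CO muC.
have [E2 _] := F1 (C `|` D) N O g L (c + e) (measurableU _ _ mC mD) mN N0 L0 g0 gL
  (fun x => fun H => match H with or_introl h => CO x h | or_intror h => DO x h end) muCD.
have ub := split_ub C D N g L mC mD mN N0 CD L0 g0 (fun x Dx => gL x (DO x Dx)).
have lb := split_lb C D g g0.
rewrite E1 E2 muD -EFinM -EFinD !lee_fin in ub lb.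
by rewrite ub lb.
Qed.

Lemma posb (v : T -> R) (L : R) y : (`|v y| <= L)%R ->
  ((fun x => (v x)%:E)^\+ y <= L%:E) /\ ((fun x => (v x)%:E)^\- y <= L%:E).
Proof.
move=> H; have L0 : (0 <= L)%R by apply: le_trans H.
rewrite funeposE funenegE !ge_max !lee_fin L0 !andbT; split.
  exact: le_trans (ler_norm _) H.
by rewrite -(normrN (v y)) in H; exact: le_trans (ler_norm _) H.
Qed.

Lemma ge0pn (v : T -> R) y :
  (0 <= (fun x => (v x)%:E)^\+ y) /\ (0 <= (fun x => (v x)%:E)^\- y).
Proof. by rewrite funeposE funenegE !le_max lexx !orbT. Qed.

Lemma avg_bound (O N A : set T) (v : T -> R) (L a : R) :
  measurable A -> measurable N -> mu N = 0 -> (0 <= L)%R ->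
  (forall y, O y -> ~ N y -> `|v y| <= L)%R -> A `<=` O -> mu A = a%:E ->
  (`|fine (\int[mu]_(y in A) (v y)%:E)| <= L * a)%R.
Proof.
move=> mA mN N0 L0 hv AO muA.
have [E1 /andP[p0 pL]] := F1 A N O _ L a mA mN N0 L0 (fun y => (ge0pn v y).1)
   (fun y Oy Ny => (posb v L y (hv y Oy Ny)).1) AO muA.
have [E2 /andP[q0 qL]] := F1 A N O _ L a mA mN N0 L0 (fun y => (ge0pn v y).2)
   (fun y Oy Ny => (posb v L y (hv y Oy Ny)).2) AO muA.
rewrite integralE E1 E2 -EFinB /=.
rewrite ler_norml; apply/andP; split; lra.
Qed.

Lemma fineI (O N A : set T) (v : T -> R) (L a : R) :
  measurable A -> measurable N -> mu N = 0 -> (0 <= L)%R ->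
  (forall y, O y -> ~ N y -> `|v y| <= L)%R -> A `<=` O -> mu A = a%:E ->
  fine (\int[mu]_(y in A) (v y)%:E) =
  (fine (\int[mu]_(y in A) (fun x => (v x)%:E)^\+ y) -
   fine (\int[mu]_(y in A) (fun x => (v x)%:E)^\- y))%R.
Proof.
move=> mA mN N0 L0 hv AO muA.
have [E1 _] := F1 A N O _ L a mA mN N0 L0 (fun y => (ge0pn v y).1)
   (fun y Oy Ny => (posb v L y (hv y Oy Ny)).1) AO muA.
have [E2 _] := F1 A N O _ L a mA mN N0 L0 (fun y => (ge0pn v y).2)
   (fun y Oy Ny => (posb v L y (hv y Oy Ny)).2) AO muA.
by rewrite integralE E1 E2 -EFinB.
Qed.

Lemma disjID (A B : set T) : [disjoint A `&` B & A `\` B].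
Proof.
rewrite disj_set2E; apply/eqP/seteqP; split => x //=.
by move=> [[_ Bx] [_ nBx]].
Qed.

Lemma avg_diff (O N Ax Ay : set T) (v : T -> R) (L c ex ey : R) :
  measurable Ax -> measurable Ay -> measurable N -> mu N = 0 -> (0 <= L)%R ->
  (forall y, O y -> ~ N y -> `|v y| <= L)%R -> Ax `<=` O -> Ay `<=` O ->
  mu (Ax `&` Ay) = c%:E -> mu (Ax `\` Ay) = ex%:E -> mu (Ay `\` Ax) = ey%:E ->
  (`|fine (\int[mu]_(y in Ax) (v y)%:E) - fine (\int[mu]_(y in Ay) (v y)%:E)|
     <= L * (ex + ey))%R.
Proof.
move=> mAx mAy mN N0 L0 hv AxO AyO muC muX muY.
have mC : measurable (Ax `&` Ay) by exact: measurableI.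
have mX : measurable (Ax `\` Ay) by exact: measurableD.
have mY : measurable (Ay `\` Ax) by exact: measurableD.
have muAx : mu Ax = (c + ex)%:E.
  rewrite (measureDI mu mAx mAy) EFinD -muC -muX; exact: addeC.
have muAy : mu Ay = (c + ey)%:E.
  rewrite (measureDI mu mAy mAx) EFinD setIC -muC -muY; exact: addeC.
rewrite (fineI O N Ax v L _ mAx mN N0 L0 hv AxO muAx) (fineI O N Ay v L _ mAy mN N0 L0 hv AyO muAy).
have CO : Ax `&` Ay `<=` O by move=> x [/AxO].
have XO : Ax `\` Ay `<=` O by move=> x [/AxO].
have YO : Ay `\` Ax `<=` O by move=> x [/AyO].
have [h1 h2] := (fun y => (ge0pn v y).1, fun y => (ge0pn v y).2).
have b1 := (fun y Oy Ny => (posb v L y (hv y Oy Ny)).1).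
have b2 := (fun y Oy Ny => (posb v L y (hv y Oy Ny)).2).
have /andP[P1 P2] := F2 _ _ _ _ _ _ _ _ mC mX mN N0 (disjID Ax Ay) L0 h1 b1 CO XO muC muX.
have /andP[Q1 Q2] := F2 _ _ _ _ _ _ _ _ mC mX mN N0 (disjID Ax Ay) L0 h2 b2 CO XO muC muX.
rewrite setUIDK in P1 P2 Q1 Q2.
have muC' : mu (Ay `&` Ax) = c%:E by rewrite setIC.
have CO' : Ay `&` Ax `<=` O by rewrite setIC.
have /andP[P3 P4] := F2 _ _ _ _ _ _ _ _ (measurableI _ _ mAy mAx) mY mN N0 (disjID Ay Ax) L0 h1 b1 CO' YO muC' muY.
have /andP[Q3 Q4] := F2 _ _ _ _ _ _ _ _ (measurableI _ _ mAy mAx) mY mN N0 (disjID Ay Ax) L0 h2 b2 CO' YO muC' muY.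
rewrite setUIDK (setIC Ay Ax) in P3 P4 Q3 Q4.
rewrite ler_norml; apply/andP; split; lra.
Qed.
End Key.

Lemma alg (R : realType) (L mx my Ix Iy dl : R) : 0 < mx -> 0 < my -> 0 <= L ->
  `|Ix| <= L * mx -> `|Iy| <= L * my -> `|Ix - Iy| <= L * dl -> `|mx - my| <= dl ->
  `|Ix / mx - Iy / my| <= 2 * L * dl / Num.max mx my.
Proof.
wlog hle : mx my Ix Iy / my <= mx.
  move=> H mx0 my0 L0 hx hy hxy hm.
  case/orP: (le_total my mx) => le; first exact: (H mx my Ix Iy le).
  rewrite distrC maxC; apply: (H my mx Iy Ix le) => //.
    by rewrite distrC.
  by rewrite distrC.
move=> mx0 my0 L0 hx hy hxy hm.
have -> : Num.max mx my = mx by rewrite max_l.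
have e : Ix / mx - Iy / my = ((Ix - Iy) * my + Iy * (my - mx)) / (mx * my).
  by field; apply/andP; split; rewrite gt_eqF.
rewrite e normrM normfV (gtr0_norm (mulr_gt0 mx0 my0)).
rewrite ler_pdivrMr ?mulr_gt0 //.
have -> : 2 * L * dl / mx * (mx * my) = 2 * L * dl * my.
  by field; rewrite gt_eqF.
apply: le_trans (ler_normD _ _) _.
rewrite !normrM (gtr0_norm my0).
have h1 : `|Ix - Iy| * my <= L * dl * my by rewrite ler_pM2r.
have h2 : `|Iy| * `|my - mx| <= L * my * dl.
  apply: ler_pM => //; by rewrite distrC.
lra.
Qed.


Section Metric.
Context (R : realType) d (T : measurableType d) (mu : {measure set T -> \bar R}).
Context (dist : T -> T -> R).
Hypothesis mms : metric_measure_space dist mu.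

Lemma oball_meas x r : measurable (oball dist x r).
Proof.
have [[d0 [dxx [dsym dtri]]] [mopenM _]] := mms.
apply: mopenM => y; rewrite /oball /= => hy; exists (r - dist x y); first by rewrite subr_gt0.
move=> z; rewrite /oball /= => hz; have := dtri x y z; lra.
Qed.

Lemma cball_meas x r : measurable (cball dist x r).
Proof.
have [[d0 [dxx [dsym dtri]]] [mopenM _]] := mms.
rewrite -(setCK (cball dist x r)); apply: measurableC; apply: mopenM => y; rewrite /cball /= => ny.
have lt : r < dist x y by rewrite ltNge; apply/negP.
exists (dist x y - r); first by rewrite subr_gt0.
move=> z; rewrite /oball /cball /= => hz hxz; have := dtri x z y; rewrite (dsym z y); lra.
Qed.

Lemma ball_fin x r : 0 < r -> exists m, 0 < m /\ mu (cball dist x r) = m%:E.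
Proof.
move=> r0.
have [_ [_ [_ mball]]] := mms.
have /andP[lo _] := mball x r r0.
have /andP[_ hi] := mball x (r + 1) ltac:(lra).
have le1 : (mu (oball dist x r) <= mu (cball dist x r))%E.
  apply: le_measure; rewrite ?inE; [exact: oball_meas|exact: cball_meas|].
  by move=> z; rewrite /oball /cball /= => /ltW.
have le2 : (mu (cball dist x r) <= mu (oball dist x (r + 1)))%E.
  apply: le_measure; rewrite ?inE; [exact: cball_meas|exact: oball_meas|].
  by move=> z; rewrite /oball /cball /= => h; lra.
have gt0 : (0 < mu (cball dist x r))%E by apply: lt_le_trans le1.
have ltoo : (mu (cball dist x r) < +oo)%E by apply: le_lt_trans hi.
exists (fine (mu (cball dist x r))); split.
  by apply: fine_gt0; rewrite gt0 ltoo.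
by rewrite fineK // ge0_fin_numE // ltW.
Qed.
End Metric.

Lemma finsub (R : realType) d (T : measurableType d) (mu : {measure set T -> \bar R})
  (A B : set T) (m : R) : measurable A -> measurable B -> A `<=` B -> mu B = m%:E ->
  mu A = (fine (mu A))%:E /\ 0 <= fine (mu A) <= m.
Proof.
move=> mA mB AB muB.
have le : (mu A <= mu B)%E by apply: le_measure; rewrite ?inE.
have ge : (0 <= mu A)%E by apply: measure_ge0.
have fin : mu A \is a fin_num by rewrite ge0_fin_numE // (le_lt_trans le) // muB ltry.
split; first by rewrite fineK.
by rewrite -!lee_fin fineK // ge -muB.
Qed.

Lemma finsub' (R : realType) d (T : measurableType d) (mu : {measure set T -> \bar R})
  (A B : set T) (m : R) : measurable A -> measurable B -> A `<=` B -> mu B = m%:E ->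
  exists a, mu A = a%:E /\ 0 <= a <= m.
Proof.
move=> mA mB AB muB; have [h1 h2] := @finsub _ _ _ mu A B m mA mB AB muB.
by exists (fine (mu A)).
Qed.

Theorem corollary3p2 (R : realType) (d : measure_display) (T : measurableType d)
  (dist : T -> T -> R) (mu : {measure set T -> \bar R}) (O : set T)
  (rho : T -> R) (u : T -> R) :
  metric_measure_space dist mu -> mdomain dist O -> admissible dist O rho ->
  measurable_fun O u -> (linf_norm mu O u < +oo)%E ->
  forall (x y : T), O x -> O y -> forall n : nat,
  `| iter n.+1 (avg_op mu dist O rho) u x - iter n.+1 (avg_op mu dist O rho) u y |
  <= 2 * fine (linf_norm mu O u)
       * fine (mu (symdiff (ball_of dist rho x) (ball_of dist rho y)))
       / Num.max (fine (mu (ball_of dist rho x))) (fine (mu (ball_of dist rho y))).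
Proof.
move=> mms dom adm mu_meas linf_fin x y Ox Oy n.
have [[d0 [dxx [dsym dtri]]] [mopenM [_ mball]]] := mms.
have mO : measurable O by apply: mopenM; case: dom => _ [].
have hb : forall e, 0 < e -> exists N, measurable N /\ mu N = 0%E /\
    forall z, O z -> ~ N z -> `|u z| <= fine (linf_norm mu O u) + e.
  move=> e e0.
  have : (linf_norm mu O u < (fine (linf_norm mu O u) + e)%:E)%E.
    move: linf_fin; case: (linf_norm mu O u) => [r| |] //= _.
      by rewrite lte_fin; lra.
    exact: ltNyr.
  rewrite {1}/linf_norm => /ereal_inf_lt [M' [N [mN [N0 hN]]]] ltM.
  exists N; split => //; split => // z Oz Nz.
  by rewrite -lee_fin; apply: le_trans (hN z Oz Nz) (ltW ltM).
have L00 : 0 <= fine (linf_norm mu O u).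
  have [x0 Ox0] := dom.1.
  have [r r0 sub] := dom.2.1 x0 Ox0.
  apply/ler_addgt0Pr => e e0.
  have [N [mN [N0 hN]]] := hb e e0.
  have [z [Oz Nz]] : exists z, O z /\ ~ N z.
    apply: contrapT => H.
    have : (mu (oball dist x0 r) <= mu N)%E.
      apply: le_measure; rewrite ?inE; [exact: (@oball_meas _ _ _ _ _ mms)|exact: mN|].
      move=> z zb; apply: contrapT => Nz; apply: H; exists z; split => //; exact: sub.
    rewrite N0; have /andP[pos _] := mball x0 r r0.
    by rewrite leNgt pos.
  exact: le_trans (normr_ge0 _) (hN z Oz Nz).
have hit : forall L, 0 <= L ->
    (exists N, measurable N /\ mu N = 0%E /\ forall z, O z -> ~ N z -> `|u z| <= L) ->
    forall k, exists N, measurable N /\ mu N = 0%E /\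
      forall z, O z -> ~ N z -> `|iter k (avg_op mu dist O rho) u z| <= L.
  move=> L L0 hu; elim=> [|k [N [mN [N0 hN]]]]; first exact: hu.
  exists set0; split; first exact: measurable0.
  split; first exact: measure0.
  move=> z Oz _.
  have rz := (adm.2.2.1 z Oz).1.
  have [m [m0 hm]] := @ball_fin _ _ _ _ _ mms z (rho z) rz.
  have hm' : mu (ball_of dist rho z) = m%:E := hm.
  have mBz : measurable (ball_of dist rho z) := @cball_meas _ _ _ _ _ mms z (rho z).
  have [a [hA /andP[a0 am]]] := @finsub' _ _ _ mu _ _ _ (measurableI _ _ mBz mO) mBz (@subIsetl _ _ _) hm'.
  have h := @avg_bound _ _ _ mu O N _ (iter k (avg_op mu dist O rho) u) L a
     (measurableI _ _ mBz mO) mN N0 L0 hN (@subIsetr _ _ _) hA.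
  rewrite /= {1}/avg_op hm' /= normrM normfV (gtr0_norm m0) ler_pdivrMr //.
  apply: le_trans h _; by apply: ler_wpM2l.

set L0 := fine (linf_norm mu O u).
apply/ler_addgt0Pr => e' e'0.
have rx := (adm.2.2.1 x Ox).1.
have ry := (adm.2.2.1 y Oy).1.
have [mx [mx0 hmx]] := @ball_fin _ _ _ _ _ mms x (rho x) rx.
have [my [my0 hmy]] := @ball_fin _ _ _ _ _ mms y (rho y) ry.
have hmx' : mu (ball_of dist rho x) = mx%:E := hmx.
have hmy' : mu (ball_of dist rho y) = my%:E := hmy.
have mBx : measurable (ball_of dist rho x) := @cball_meas _ _ _ _ _ mms x (rho x).
have mBy : measurable (ball_of dist rho y) := @cball_meas _ _ _ _ _ mms y (rho y).
set Bx := ball_of dist rho x in hmx' mBx *.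
set By := ball_of dist rho y in hmy' mBy *.
have [bx [hbx /andP[bx0 _]]] :=
  @finsub' _ _ _ mu _ _ _ (measurableD mBx mBy) mBx (@subDsetl _ _ _) hmx'.
have [bY [hbY /andP[bY0 _]]] :=
  @finsub' _ _ _ mu _ _ _ (measurableD mBy mBx) mBy (@subDsetl _ _ _) hmy'.
have [cb [hcb /andP[cb0 _]]] :=
  @finsub' _ _ _ mu _ _ _ (measurableI _ _ mBx mBy) mBx (@subIsetl _ _ _) hmx'.
have emx : mx = cb + bx.
  have : mx%:E = (cb + bx)%:E.
    by rewrite EFinD addeC -hmx' -hbx -hcb; exact: measureDI.
  by case.
have emy : my = cb + bY.
  have : my%:E = (cb + bY)%:E.
    by rewrite EFinD addeC -hmy' -hbY -hcb setIC; exact: measureDI.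
  by case.
have hdl : mu (symdiff Bx By) = (bx + bY)%:E.
  rewrite EFinD -hbx -hbY; apply: measureU; [exact: measurableD|exact: measurableD|].
  by apply/seteqP; split => z //= [[_ nz] [zy _]].
rewrite hmx' hmy' hdl /=.
set Ax := Bx `&` O.
set Ay := By `&` O.
have mAx : measurable Ax := measurableI _ _ mBx mO.
have mAy : measurable Ay := measurableI _ _ mBy mO.
have [ax [hax /andP[ax0 axm]]] :=
  @finsub' _ _ _ mu _ _ _ mAx mBx (@subIsetl _ _ _) hmx'.
have [ay [hay /andP[ay0 aym]]] :=
  @finsub' _ _ _ mu _ _ _ mAy mBy (@subIsetl _ _ _) hmy'.
have [c [hc _]] :=
  @finsub' _ _ _ mu _ _ _ (measurableI _ _ mAx mAy) mBx
    (fun z => fun H => match H with conj (conj h _) _ => h end) hmx'.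
have [ex [hex /andP[ex0 exm]]] :=
  @finsub' _ _ _ mu _ _ _ (measurableD mAx mAy) (measurableD mBx mBy)
    (fun z => fun H => match H with conj (conj Bz Oz) nA =>
       conj Bz (fun Byz => nA (conj Byz Oz)) end) hbx.
have [ey [hey /andP[ey0 eym]]] :=
  @finsub' _ _ _ mu _ _ _ (measurableD mAy mAx) (measurableD mBy mBx)
    (fun z => fun H => match H with conj (conj Bz Oz) nA =>
       conj Bz (fun Byz => nA (conj Byz Oz)) end) hbY.
pose K := (bx + bY) / Num.max mx my.
have mm0 : 0 < Num.max mx my by rewrite lt_max mx0.
have K0 : 0 <= K by rewrite /K divr_ge0 // ?addr_ge0 // ltW.
pose e := e' / (2 * K + 1).
have e0 : 0 < e by rewrite /e divr_gt0 //; lra.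
have L0' : 0 <= L0 + e by rewrite /L0; lra.
have [N [mN [N0 hN]]] := hit (L0 + e) L0' (hb e e0) n.
have hx := @avg_bound _ _ _ mu O N Ax _ (L0 + e) ax mAx mN N0 L0' hN
  (@subIsetr _ _ _) hax.
have hy := @avg_bound _ _ _ mu O N Ay _ (L0 + e) ay mAy mN N0 L0' hN
  (@subIsetr _ _ _) hay.
have hxy := @avg_diff _ _ _ mu O N Ax Ay _ (L0 + e) c ex ey mAx mAy mN N0 L0' hN
  (@subIsetr _ _ _) (@subIsetr _ _ _) hc hex hey.
have hm : `|mx - my| <= bx + bY.
  rewrite emx emy ler_norml; apply/andP; split; lra.
have key := @alg _ (L0 + e) mx my _ _ (bx + bY) mx0 my0 L0'
  (le_trans hx (ler_wpM2l L0' axm)) (le_trans hy (ler_wpM2l L0' aym))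
  (le_trans hxy (ler_wpM2l L0' (lerD exm eym))) hm.
rewrite /= {1 3}/avg_op hmx' hmy'.
apply: le_trans key _.
have -> : 2 * (L0 + e) * (bx + bY) / Num.max mx my =
          2 * L0 * (bx + bY) / Num.max mx my + 2 * e * K.
  by rewrite /K; field; rewrite gt_eqF.
rewrite lerD2l.
have ee : e' = (2 * K + 1) * e by rewrite /e; field; rewrite gt_eqF //; lra.
rewrite ee; nra.
Qed.
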